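(* Assume there is $\eta\in(0,1]$ with $O(o\mid s,a)\ge \eta$ for all $o\in\mathcal O$, $s\in\mathcal S$, $a\in\mathcal A$. Then for every fixed action $a\in\mathcal A$ and all beliefs $b,b'\in\Delta(\mathcal S)$ with $b(s^\star)>0$ and $b'(s^\star)>0$, $$\big|\mathcal I(b,a)-\mathcal I(b',a)\big|\le \frac{1}{\eta}\,\|b-b'\|_1 .$$ Consequently, for every probability distribution $q$ on $\mathcal A$, $$\Big|\mathbb E_{a\sim q}\mathcal I(b,a)-\mathbb E_{a\sim q}\mathcal I(b',a)\Big|\le \frac1\eta\,\|b-b'\|_1 .$$
   Context: $\mathcal S,\mathcal A,\mathcal O$ are finite sets (latent states, actions, observations); $s^\star\in\mathcal S$ is a fixed true latent state; $O(o\mid s,a)$ is an observation kernel (for each $s,a$, a probability distribution over $o\in\mathcal O$). $\Delta(\mathcal S)$ is the probability simplex over $\mathcal S$ and $\|b-b'\|_1=\sum_{s}|b(s)-b'(s)|$. The Bayes-normalizer is $p_b(o\mid a)=\sum_{s'\in\mathcal S}O(o\mid s',a)\,b(s')$ and the oracle (Bayesian) belief update is $B^\star(b,a,o)(s)=O(o\mid s,a)\,b(s)/p_b(o\mid a)$. The truth-anchored potential is $\Psi(b)=-\log b(s^\star)\in[0,\infty]$. The one-step informativeness of action $a$ at belief $b$ is $\mathcal I(b,a)=\Psi(b)-\mathbb E_{o\sim O(\cdot\mid s^\star,a)}\big[\Psi(B^\star(b,a,o))\big]$. *)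

(* Defs.v *)
From HB Require Import structures.
From mathcomp Require Import all_boot all_order all_algebra.
From mathcomp Require Import all_classical all_reals all_analysis.
Set Implicit Arguments. Unset Strict Implicit. Unset Printing Implicit Defensive.
Import Order.TTheory GRing.Theory Num.Theory.
Local Open Scope ring_scope.

Section Defs.
Variables (R : realType) (S A O : finType).

Definition is_belief (b : S -> R) : Prop :=
  (forall s, 0 <= b s) /\ \sum_(s : S) b s = 1.

Definition is_dist_A (q : A -> R) : Prop :=
  (forall a, 0 <= q a) /\ \sum_(a : A) q a = 1.

Definition is_obs_kernel (Obs : O -> S -> A -> R) : Prop :=
  forall s a, (forall o, 0 <= Obs o s a) /\ \sum_(o : O) Obs o s a = 1.

Definition p_norm (Obs : O -> S -> A -> R) (b : S -> R) (a : A) (o : O) : R :=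
  \sum_(s' : S) Obs o s' a * b s'.

Definition bayes_update (Obs : O -> S -> A -> R) (b : S -> R) (a : A) (o : O)
  : S -> R :=
  fun s => Obs o s a * b s / p_norm Obs b a o.

Definition l1_dist (b b' : S -> R) : R := \sum_(s : S) `|b s - b' s|.

Definition Psi (sstar : S) (b : S -> R) : R := - ln (b sstar).

Definition informativeness (Obs : O -> S -> A -> R) (sstar : S)
  (b : S -> R) (a : A) : R :=
  Psi sstar b - \sum_(o : O) Obs o sstar a * Psi sstar (bayes_update Obs b a o).

End Defs.

(* Main.v *)
Require Import Defs.
From HB Require Import structures.
From mathcomp Require Import all_boot all_order all_algebra.
From mathcomp Require Import all_classical all_reals all_analysis.
From mathcomp Require Import lra.
Import Order.TTheory GRing.Theory Num.Theory.
Local Open Scope ring_scope.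

Lemma p_norm_ge {R : realType} {S A O : finType} {Obs : O -> S -> A -> R} {eta} b a o :
  (forall o s a, eta <= Obs o s a) -> is_belief b -> eta <= p_norm Obs b a o.
Proof.
move=> hO [b0 b1]; rewrite /p_norm.
have -> : eta = \sum_s eta * b s by rewrite -mulr_sumr b1 mulr1.
by apply: ler_sum => s _; apply: ler_wpM2r.
Qed.

Lemma inf_formula (R : realType) (S A O : finType) (sstar : S)
  (Obs : O -> S -> A -> R) (eta : R) b a :
  is_obs_kernel Obs -> 0 < eta -> (forall o s a, eta <= Obs o s a) ->
  is_belief b -> 0 < b sstar ->
  informativeness Obs sstar b a =
  \sum_o Obs o sstar a * ln (Obs o sstar a) - \sum_o Obs o sstar a * ln (p_norm Obs b a o).
Proof.
move=> hk he hO hb hs.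
have [_ hsum] := hk sstar a.
rewrite /informativeness /Psi /bayes_update.
have -> : \sum_o Obs o sstar a * - ln (Obs o sstar a * b sstar / p_norm Obs b a o)
  = \sum_o (- (Obs o sstar a * ln (Obs o sstar a)) - Obs o sstar a * ln (b sstar)
          + Obs o sstar a * ln (p_norm Obs b a o)).
  apply: eq_bigr => o _.
  have hp : 0 < p_norm Obs b a o by apply: lt_le_trans he (p_norm_ge b a o hO hb).
  have hO0 : 0 < Obs o sstar a by apply: lt_le_trans he (hO _ _ _).
  rewrite ln_div ?posrE ?mulr_gt0 // lnM ?posrE //.
  by rewrite !mulrN !mulrDr !mulrN; lra.
have h : \sum_i - (Obs i sstar a * ln (b sstar)) = - ln (b sstar)
  by rewrite sumrN -mulr_suml hsum mul1r.
rewrite !big_split /= h sumrN.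
lra.
Qed.
Lemma ln_lip1 (R : realType) (eta x y : R) : 0 < eta -> eta <= x -> eta <= y ->
  ln x - ln y <= `|x - y| / eta.
Proof.
move=> he hx hy.
have x0 : 0 < x by apply: lt_le_trans hx.
have y0 : 0 < y by apply: lt_le_trans hy.
rewrite -ln_div ?posrE //.
have -> : x / y = 1 + (x / y - 1) by rewrite addrC subrK.
apply: le_trans (le_ln1Dx _) _.
  by rewrite -subr_gt0 opprK subrK divr_gt0.
have -> : x / y - 1 = (x - y) / y by rewrite mulrBl divff ?gt_eqF.
apply: le_trans (ler_norm _) _.
rewrite normrM normfV (gtr0_norm y0).
apply: ler_wpM2l; first exact: normr_ge0.
by rewrite lef_pV2 ?posrE.
Qed.

Lemma ln_lip (R : realType) (eta x y : R) : 0 < eta -> eta <= x -> eta <= y ->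
  `|ln x - ln y| <= `|x - y| / eta.
Proof.
move=> he hx hy; rewrite ler_norml ln_lip1 // andbT.
by rewrite lerNl opprB distrC ln_lip1.
Qed.

Theorem mainTheorem1 (R : realType) (S A O : finType) (sstar : S)
  (Obs : O -> S -> A -> R) (eta : R) :
  is_obs_kernel Obs ->
  0 < eta -> eta <= 1 ->
  (forall o s a, eta <= Obs o s a) ->
  (forall (a : A) (b b' : S -> R),
      is_belief b -> is_belief b' -> 0 < b sstar -> 0 < b' sstar ->
      `|informativeness Obs sstar b a - informativeness Obs sstar b' a|
        <= eta^-1 * l1_dist b b')
  /\
  (forall (q : A -> R) (b b' : S -> R),
      is_dist_A q ->
      is_belief b -> is_belief b' -> 0 < b sstar -> 0 < b' sstar ->
      `|\sum_(a : A) q a * informativeness Obs sstar b a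
        - \sum_(a : A) q a * informativeness Obs sstar b' a|
        <= eta^-1 * l1_dist b b').
Proof.
move=> hk he he1 hO.
have P1 : forall (a : A) (b b' : S -> R),
      is_belief b -> is_belief b' -> 0 < b sstar -> 0 < b' sstar ->
      `|informativeness Obs sstar b a - informativeness Obs sstar b' a|
        <= eta^-1 * l1_dist b b'.
  move=> a b b' hb hb' hs hs'.
  rewrite (@inf_formula _ _ _ _ sstar Obs eta b a hk he hO hb hs) (@inf_formula _ _ _ _ sstar Obs eta b' a hk he hO hb' hs').
  set C := \sum_o _.
  have -> : C - \sum_o Obs o sstar a * ln (p_norm Obs b a o) -
     (C - \sum_o Obs o sstar a * ln (p_norm Obs b' a o)) =
     \sum_o Obs o sstar a * (ln (p_norm Obs b' a o) - ln (p_norm Obs b a o)).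
    by rewrite (eq_bigr _ (fun o _ => mulrBr _ _ _)) sumrB; lra.
  apply: le_trans (ler_norm_sum _ _ _) _.
  apply: (@le_trans _ _ (\sum_o \sum_s Obs o s a * `|b s - b' s| / eta)).
    apply: ler_sum => o _.
    have [hZ hZs] := hk sstar a.
    have hZ1 : Obs o sstar a <= 1.
      by rewrite -hZs (bigD1 o) //= lerDl sumr_ge0.
    rewrite normrM (ger0_norm (hZ o)) -mulr_suml.
    apply: (@le_trans _ _ (1 * (`|p_norm Obs b' a o - p_norm Obs b a o| / eta))).
      apply: ler_pM; [exact: hZ o| exact: normr_ge0| exact: hZ1|].
      apply: ln_lip => //; exact: p_norm_ge.
    rewrite mul1r ler_wpM2r ?invr_ge0 ?(ltW he) // distrC /p_norm -sumrB.
    apply: le_trans (ler_norm_sum _ _ _) _.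
    apply: ler_sum => s _.
    have [hZ' _] := hk s a.
    by rewrite -mulrBr normrM ger0_norm.
  rewrite exchange_big /= mulrC /l1_dist mulr_suml.
  apply: ler_sum => s _.
  have [_ hZs] := hk s a.
  by rewrite -mulr_suml -mulr_suml hZs mul1r.
split => // q b b' [q0 q1] hb hb' hs hs'.
rewrite -sumrB.
apply: le_trans (ler_norm_sum _ _ _) _.
apply: (@le_trans _ _ (\sum_a q a * (eta^-1 * l1_dist b b'))).
  apply: ler_sum => a _.
  by rewrite -mulrBr normrM ger0_norm // ler_wpM2l // P1.
by rewrite -mulr_suml q1 mul1r.
Qed.
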